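(* Let $a:[0,\infty)\to[0,\infty)$ be non-negative and non-decreasing, let $f(x)=\exp(-\int_0^x a(y)dy)$, and for $s\ge1$ let $q_s(n)=\prod_{k=0}^n\bigl(1+\tfrac1{\sqrt s}a\bigl(\tfrac{k+1}{\sqrt s}\bigr)\bigr)^{-1}$, $n\in\mathbb N_0$. Then there is an increasing function $\psi(s)$ of $s\ge1$ with $\psi(s)\to\infty$ as $s\to\infty$ such that $q_s(n)=f\bigl(\tfrac{n+1}{\sqrt s}\bigr)\bigl(1+O(s^{-1/4})\bigr)$ for $0\le n+1\le\sqrt s\,\psi(s)$.
   Context: $q_s(n)=p_s(0)\cdots p_s(n)$ for the local admission control $p_s(k)=\bigl(1+\tfrac1{\sqrt s}a(\tfrac{k+1}{\sqrt s})\bigr)^{-1}$ of an $s$-server system. *)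

(* Defs.v *)
From Stdlib Require Import Reals.
From Coquelicot Require Import Coquelicot.
Open Scope R_scope.

Definition p_adm (a : R -> R) (s : R) (k : nat) : R :=
  / (1 + / sqrt s * a (INR (k + 1) / sqrt s)).

Fixpoint q_adm (a : R -> R) (s : R) (n : nat) : R :=
  match n with
  | O => p_adm a s 0
  | S m => q_adm a s m * p_adm a s (S m)
  end.

Definition f_adm (a : R -> R) (x : R) : R := exp (- RInt a 0 x).

(* Main.v *)
Require Import Defs.
From Stdlib Require Import Reals Lra Lia Psatz ZArith.
From Coquelicot Require Import Coquelicot.
Open Scope R_scope.

Lemma ball_R (x y : R) (e : R) : ball x e y <-> Rabs (y - x) < e.
Proof. reflexivity. Qed.

Lemma arith_sw (Sf Sg Sh Ig Ih e : R) : Sg <= Sf -> Sf <= Sh ->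
  Ig - e/2 < Sg < Ig + e/2 -> Ih - e/2 < Sh < Ih + e/2 -> Ih - Ig < e/2 ->
  Ig - e < Sf < Ig + e.
Proof. intros; lra. Qed.

Lemma ex_RInt_sandwich (f : R -> R) (c d : R) : c < d ->
  (forall eps : posreal, exists g h : R -> R, ex_RInt g c d /\ ex_RInt h c d /\
     (forall t, c <= t <= d -> g t <= f t <= h t) /\ RInt h c d - RInt g c d < eps) ->
  ex_RInt f c d.
Proof.
  intros Hcd H.
  set (F := filtermap (fun ptd => scal (sign (d - c)) (Riemann_sum f ptd)) (Riemann_fine c d)).
  assert (PF : ProperFilter F) by (apply filtermap_proper_filter, Riemann_fine_filter).
  assert (Hs : sign (d - c) = 1) by (apply sign_eq_1; lra).
  assert (HC : cauchy F).
  { intros eps.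
    assert (He : 0 < eps / 2) by (destruct eps; simpl; lra).
    destruct (H (mkposreal _ He)) as [g [h [Hg [Hh [Hgh Hgap]]]]]. simpl in Hgap.
    exists (RInt g c d).
    pose proof (RInt_correct g c d Hg) as Ig.
    pose proof (RInt_correct h c d Hh) as Ih.
    unfold is_RInt in Ig; pose proof (proj1 (filterlim_locally _ _) Ig (mkposreal _ He)) as Ig_; clear Ig; rename Ig_ into Ig.
    unfold is_RInt in Ih; pose proof (proj1 (filterlim_locally _ _) Ih (mkposreal _ He)) as Ih_; clear Ih; rename Ih_ into Ih.
    assert (Hw : Riemann_fine c d (fun ptd => pointed_subdiv ptd /\ SF_h ptd = Rmin c d /\ seq.last (SF_h ptd) (SF_lx ptd) = Rmax c d)).
    { unfold Riemann_fine, within. apply filter_forall. auto. }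
    unfold F, filtermap.
    generalize (filter_and _ _ Hw (filter_and _ _ Ig Ih)).
    apply filter_imp. intros ptd [[Hp [H1 H2]] [A1 A2]].
    rewrite Rmin_left in H1 by lra. rewrite Rmax_right in H2 by lra.
    rewrite ball_R in A1, A2 |- *. simpl in A1, A2.
    rewrite Hs in A1, A2 |- *. unfold scal in A1, A2 |- *; simpl in A1, A2 |- *; unfold mult in A1, A2 |- *; simpl in A1, A2 |- *; rewrite !Rmult_1_l in A1, A2 |- *.
    assert (L1 : Riemann_sum g ptd <= Riemann_sum f ptd).
    { apply Riemann_sum_le; auto. intros t Ht. rewrite H2 in Ht. rewrite H1 in Ht. apply Hgh; auto. }
    assert (L2 : Riemann_sum f ptd <= Riemann_sum h ptd).
    { apply Riemann_sum_le; auto. intros t Ht. rewrite H2 in Ht. rewrite H1 in Ht. apply Hgh; auto. }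
    apply Rabs_lt_between' in A1. apply Rabs_lt_between' in A2.
    apply Rabs_lt_between'. destruct eps as [e ep]; simpl in *. exact (arith_sw _ _ _ _ _ _ L1 L2 A1 A2 Hgap). }
  exists (lim F). unfold is_RInt. apply filterlim_locally. intros eps.
  apply (complete_cauchy F PF HC eps).
Qed.
Fixpoint Gs (f : R -> R) (dl : R) (k : nat) (c t : R) : R :=
  match k with
  | O => f c
  | S k' => if Rlt_dec t (c + dl) then f c else Gs f dl k' (c + dl) t
  end.
Fixpoint Hs (f : R -> R) (dl : R) (k : nat) (c t : R) : R :=
  match k with
  | O => f (c + dl)
  | S k' => if Rlt_dec t (c + dl) then f (c + dl) else Hs f dl k' (c + dl) t
  end.

Lemma RInt_Chasles_R (F : R -> R) a b c : ex_RInt F a b -> ex_RInt F b c ->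
  RInt F a c = RInt F a b + RInt F b c.
Proof. intros H1 H2. rewrite <- (RInt_Chasles F a b c H1 H2). reflexivity. Qed.

Lemma RInt_const_R (a b v : R) : RInt (fun _ => v) a b = (b - a) * v.
Proof. rewrite RInt_const. reflexivity. Qed.

Lemma step_props (f : R -> R) (mono : forall x y, 0 <= x -> x <= y -> f x <= f y)
  (dl : R) (Hdl : 0 < dl) : forall k c, 0 <= c ->
  ex_RInt (Gs f dl k c) c (c + INR (S k) * dl) /\
  ex_RInt (Hs f dl k c) c (c + INR (S k) * dl) /\
  (forall t, c <= t <= c + INR (S k) * dl -> Gs f dl k c t <= f t <= Hs f dl k c t) /\
  RInt (Hs f dl k c) c (c + INR (S k) * dl) - RInt (Gs f dl k c) c (c + INR (S k) * dl)
   = dl * (f (c + INR (S k) * dl) - f c).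
Proof.
  induction k as [|k IH]; intros c Hc.
  - replace (c + INR 1 * dl) with (c + dl) by (simpl; ring).
    change (Gs f dl 0 c) with (fun _ : R => f c).
    change (Hs f dl 0 c) with (fun _ : R => f (c + dl)).
    split; [apply ex_RInt_const|]. split; [apply ex_RInt_const|]. split.
    + intros t Ht. split; apply mono; lra.
    + rewrite !RInt_const_R. ring.
  - set (e := c + INR (S (S k)) * dl).
    assert (He : e = (c + dl) + INR (S k) * dl) by (unfold e; rewrite (S_INR (S k)); ring).
    destruct (IH (c + dl) ltac:(lra)) as [IG [IH' [IS ID]]].
    rewrite <- He in IG, IH', IS, ID.
    assert (Hpos : 0 <= INR (S k) * dl) by (apply Rmult_le_pos; [apply pos_INR|lra]).
    assert (EG1 : ex_RInt (Gs f dl (S k) c) c (c + dl)).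
    { apply ex_RInt_ext with (fun _ => f c); [|apply ex_RInt_const].
      intros x Hx. rewrite Rmin_left in Hx by lra. rewrite Rmax_right in Hx by lra.
      simpl. destruct (Rlt_dec x (c + dl)); [reflexivity|lra]. }
    assert (EH1 : ex_RInt (Hs f dl (S k) c) c (c + dl)).
    { apply ex_RInt_ext with (fun _ => f (c + dl)); [|apply ex_RInt_const].
      intros x Hx. rewrite Rmin_left in Hx by lra. rewrite Rmax_right in Hx by lra.
      simpl. destruct (Rlt_dec x (c + dl)); [reflexivity|lra]. }
    assert (EG2 : ex_RInt (Gs f dl (S k) c) (c + dl) e).
    { apply ex_RInt_ext with (Gs f dl k (c + dl)); [|exact IG].
      intros x Hx. rewrite Rmin_left in Hx by lra. rewrite Rmax_right in Hx by lra.
      simpl. destruct (Rlt_dec x (c + dl)); [lra|reflexivity]. }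
    assert (EH2 : ex_RInt (Hs f dl (S k) c) (c + dl) e).
    { apply ex_RInt_ext with (Hs f dl k (c + dl)); [|exact IH'].
      intros x Hx. rewrite Rmin_left in Hx by lra. rewrite Rmax_right in Hx by lra.
      simpl. destruct (Rlt_dec x (c + dl)); [lra|reflexivity]. }
    split; [apply ex_RInt_Chasles with (c + dl); assumption|].
    split; [apply ex_RInt_Chasles with (c + dl); assumption|].
    split.
    + intros t Ht. simpl. destruct (Rlt_dec t (c + dl)).
      * split; apply mono; lra.
      * apply IS. lra.
    + rewrite (RInt_Chasles_R _ c (c + dl) e EH1 EH2).
      rewrite (RInt_Chasles_R _ c (c + dl) e EG1 EG2).
      rewrite (RInt_ext (Gs f dl (S k) c) (fun _ => f c) c (c + dl)).
      2:{ intros x Hx. rewrite Rmin_left in Hx by lra. rewrite Rmax_right in Hx by lra.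
      simpl. destruct (Rlt_dec x (c + dl)); [reflexivity|lra]. }
      rewrite (RInt_ext (Hs f dl (S k) c) (fun _ => f (c + dl)) c (c + dl)).
      2:{ intros x Hx. rewrite Rmin_left in Hx by lra. rewrite Rmax_right in Hx by lra.
      simpl. destruct (Rlt_dec x (c + dl)); [reflexivity|lra]. }
      rewrite (RInt_ext (Gs f dl (S k) c) (Gs f dl k (c + dl)) (c + dl) e).
      2:{ intros x Hx. rewrite Rmin_left in Hx by lra. rewrite Rmax_right in Hx by lra.
      simpl. destruct (Rlt_dec x (c + dl)); [lra|reflexivity]. }
      rewrite (RInt_ext (Hs f dl (S k) c) (Hs f dl k (c + dl)) (c + dl) e).
      2:{ intros x Hx. rewrite Rmin_left in Hx by lra. rewrite Rmax_right in Hx by lra.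
      simpl. destruct (Rlt_dec x (c + dl)); [lra|reflexivity]. }
      rewrite !RInt_const_R.
      assert (X : RInt (Hs f dl k (c + dl)) (c + dl) e - RInt (Gs f dl k (c + dl)) (c + dl) e
                 = dl * (f e - f (c + dl))) by exact ID.
      lra.
Qed.

Lemma ex_RInt_mono (f : R -> R) (mono : forall x y, 0 <= x -> x <= y -> f x <= f y)
  (c d : R) : 0 <= c -> c <= d -> ex_RInt f c d.
Proof.
  intros Hc Hcd. destruct (Req_dec c d) as [<-|Hne]; [apply ex_RInt_point|].
  apply ex_RInt_sandwich; [lra|]. intros eps.
  set (K := (d - c) * (f d - f c)).
  assert (HK : 0 <= K) by (unfold K; apply Rmult_le_pos; [lra| assert (f c <= f d) by (apply mono; lra); lra]).
  destruct (archimed_cor1 (eps / (K + 1))) as [N [HN HN0]].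
  { apply Rdiv_lt_0_compat; [apply cond_pos|lra]. }
  destruct N as [|k]; [lia|].
  assert (HI : 0 < INR (S k)) by (apply lt_0_INR; lia).
  set (dl := (d - c) / INR (S k)).
  assert (Hdl : 0 < dl) by (unfold dl; apply Rdiv_lt_0_compat; lra).
  assert (Hend : c + INR (S k) * dl = d) by (unfold dl; field; lra).
  destruct (step_props f mono dl Hdl k c Hc) as [G1 [G2 [G3 G4]]].
  rewrite Hend in G1, G2, G3, G4.
  exists (Gs f dl k c), (Hs f dl k c). split; [exact G1|]. split; [exact G2|].
  split; [exact G3|]. rewrite G4.
  assert (E : dl * (f d - f c) = K * / INR (S k)) by (unfold dl, K; field; lra).
  rewrite E.
  assert (HV : 0 < / INR (S k)) by (apply Rinv_0_lt_compat; lra).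
  assert (E2 : eps / (K + 1) * (K + 1) = eps) by (field; lra).
  assert (K * / INR (S k) <= (K+1) * / INR (S k)) by nra.
  assert ((K+1) * / INR (S k) < (K+1) * (eps / (K + 1))) by (apply Rmult_lt_compat_l; lra).
  lra.
Qed.

Definition uu (a : R -> R) (s : R) (k : nat) : R := / sqrt s * a (INR (k + 1) / sqrt s).
Definition Sup a s n := sum_f_R0 (uu a s) n.
Definition Sq a s n := sum_f_R0 (fun k => (uu a s k) ^ 2) n.
Definition Sdn a s n := sum_f_R0 (fun k => / sqrt s * a (INR k / sqrt s)) n.

Lemma p_bounds (u : R) : 0 <= u -> exp (- u) <= / (1 + u) <= exp (- u + u ^ 2).
Proof.
  intros Hu. split.
  - rewrite exp_Ropp. apply Rinv_le_contravar; [lra|]. pose proof (exp_ineq1_le u). lra.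
  - apply Rle_trans with (1 - u + u ^ 2).
    + assert (E : (1 - u + u ^ 2) - / (1 + u) = u ^ 3 / (1 + u)) by (field; lra).
      assert (0 <= u ^ 3 / (1 + u)) by (apply Rdiv_le_0_compat; [apply pow_le; lra| lra]).
      lra.
    + pose proof (exp_ineq1_le (- u + u ^ 2)). lra.
Qed.

Lemma exp_mono x y : x <= y -> exp x <= exp y.
Proof. intros H. destruct (Req_dec x y) as [->|Hn]; [lra|]. apply Rlt_le, exp_increasing. lra. Qed.

Section Core.
Variable a : R -> R.
Hypothesis a_nonneg : forall x, 0 <= x -> 0 <= a x.
Hypothesis a_mono : forall x y, 0 <= x -> x <= y -> a x <= a y.
Variable s : R.
Hypothesis Hs : 1 <= s.

Lemma sqrt_pos' : 0 < sqrt s.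
Proof. apply sqrt_lt_R0. lra. Qed.

Lemma uu_nonneg k : 0 <= uu a s k.
Proof.
  pose proof sqrt_pos'. unfold uu. apply Rmult_le_pos.
  - apply Rlt_le, Rinv_0_lt_compat; lra.
  - apply a_nonneg. apply Rdiv_le_0_compat; [apply pos_INR|lra].
Qed.

Lemma q_bounds n : exp (- Sup a s n) <= q_adm a s n <= exp (- Sup a s n + Sq a s n).
Proof.
  induction n as [|n IH].
  - unfold Sup, Sq. simpl. apply p_bounds. apply uu_nonneg.
  - unfold Sup, Sq in *. change (q_adm a s (S n)) with (q_adm a s n * p_adm a s (S n)).
    change (sum_f_R0 (uu a s) (S n)) with (sum_f_R0 (uu a s) n + uu a s (S n)).
    change (sum_f_R0 (fun k => uu a s k ^ 2) (S n)) with
      (sum_f_R0 (fun k => uu a s k ^ 2) n + uu a s (S n) ^ 2).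
    destruct (p_bounds (uu a s (S n)) (uu_nonneg _)) as [P1 P2].
    change (p_adm a s (S n)) with (/ (1 + uu a s (S n))).
    split.
    + replace (- (sum_f_R0 (uu a s) n + uu a s (S n))) with
        (- sum_f_R0 (uu a s) n + - uu a s (S n)) by ring.
      rewrite exp_plus. apply Rmult_le_compat; try (apply Rlt_le, exp_pos); lra.
    + replace (- (sum_f_R0 (uu a s) n + uu a s (S n)) +
               (sum_f_R0 (fun k => uu a s k ^ 2) n + uu a s (S n) ^ 2)) with
        ((- sum_f_R0 (uu a s) n + sum_f_R0 (fun k => uu a s k ^ 2) n) +
         (- uu a s (S n) + uu a s (S n) ^ 2)) by ring.
      rewrite exp_plus. apply Rmult_le_compat; try lra.
      * apply Rle_trans with (exp (- sum_f_R0 (uu a s) n)); [apply Rlt_le, exp_pos|lra].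
      * apply Rlt_le, Rinv_0_lt_compat. pose proof (uu_nonneg (S n)). lra.
Qed.

Lemma piece c h : 0 <= c -> 0 < h -> h * a c <= RInt a c (c + h) <= h * a (c + h).
Proof.
  intros Hc Hh.
  assert (EX : ex_RInt a c (c + h)) by (apply ex_RInt_mono; auto; lra).
  split.
  - assert (E1 : h * a c = RInt (fun _ => a c) c (c + h)) by (rewrite RInt_const_R; ring).
    rewrite E1.
    apply RInt_le; [lra|apply ex_RInt_const|exact EX|].
    intros x Hx. apply a_mono; lra.
  - assert (E1 : h * a (c + h) = RInt (fun _ => a (c + h)) c (c + h)) by (rewrite RInt_const_R; ring).
    rewrite E1.
    apply RInt_le; [lra|exact EX|apply ex_RInt_const|].
    intros x Hx. apply a_mono; lra.
Qed.

Lemma X_succ n : INR (S n + 1) / sqrt s = INR (n + 1) / sqrt s + / sqrt s.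
Proof. pose proof sqrt_pos'. rewrite !plus_INR, S_INR. field. lra. Qed.

Lemma I_bounds n : Sdn a s n <= RInt a 0 (INR (n + 1) / sqrt s) <= Sup a s n.
Proof.
  pose proof sqrt_pos' as Hq.
  assert (Hd : 0 < / sqrt s) by (apply Rinv_0_lt_compat; lra).
  induction n as [|n IH].
  - unfold Sdn, Sup, uu. simpl.
    replace (1 / sqrt s) with (0 + / sqrt s) by (field; lra).
    replace (0 / sqrt s) with 0 by (field; lra).
    apply piece; lra.
  - unfold Sdn, Sup in *. rewrite !tech5. cbv beta.
    assert (HX0 : 0 <= INR (n + 1) / sqrt s) by (apply Rdiv_le_0_compat; [apply pos_INR|lra]).
    rewrite X_succ.
    rewrite (RInt_Chasles_R a 0 (INR (n + 1) / sqrt s)).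
    2: apply ex_RInt_mono; auto; lra.
    2: apply ex_RInt_mono; auto; lra.
    destruct (piece (INR (n + 1) / sqrt s) (/ sqrt s) HX0 Hd) as [P1 P2].
    unfold uu at 2. rewrite X_succ.
    replace (INR (S n) / sqrt s) with (INR (n + 1) / sqrt s)
      by (f_equal; f_equal; lia).
    lra.
Qed.

Lemma tele n : Sup a s n - Sdn a s n =
  / sqrt s * (a (INR (n + 1) / sqrt s) - a (INR 0 / sqrt s)).
Proof.
  induction n as [|n IH].
  - unfold Sup, Sdn, uu. simpl. ring.
  - unfold Sup, Sdn in *. rewrite !tech5. cbv beta. unfold uu at 2.
    replace (INR (S n)) with (INR (n + 1)) by (f_equal; lia).
    rewrite X_succ. lra.
Qed.

Lemma sum_bound (g : nat -> R) (M : R) n :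
  (forall k, (k <= n)%nat -> g k <= M) -> sum_f_R0 g n <= INR (S n) * M.
Proof.
  induction n as [|n IH]; intros H.
  - simpl. rewrite Rmult_1_l. apply H. lia.
  - simpl sum_f_R0. rewrite (S_INR (S n)).
    assert (sum_f_R0 g n <= INR (S n) * M) by (apply IH; intros; apply H; lia).
    assert (g (S n) <= M) by (apply H; lia). lra.
Qed.

Lemma Sq_bound n : Sq a s n <= INR (S n) * (/ sqrt s * a (INR (n + 1) / sqrt s)) ^ 2.
Proof.
  pose proof sqrt_pos' as Hq.
  apply sum_bound. intros k Hk.
  pose proof (uu_nonneg k) as H0.
  assert (uu a s k <= / sqrt s * a (INR (n + 1) / sqrt s)).
  { unfold uu. apply Rmult_le_compat_l; [apply Rlt_le, Rinv_0_lt_compat; lra|].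
    apply a_mono. apply Rdiv_le_0_compat; [apply pos_INR|lra].
    unfold Rdiv. apply Rmult_le_compat_r; [apply Rlt_le, Rinv_0_lt_compat; lra|].
    apply le_INR. lia. }
  nra.
Qed.

Lemma core n : let x := INR (n + 1) / sqrt s in
  let E := / sqrt s * (a x + x * (a x) ^ 2) in E <= 1/2 ->
  exists eps, Rabs eps <= 2 * E /\ q_adm a s n = f_adm a x * (1 + eps).
Proof.
  intros x E HE.
  pose proof sqrt_pos' as Hq.
  assert (Hd : 0 < / sqrt s) by (apply Rinv_0_lt_compat; lra).
  assert (Hx : 0 <= x) by (apply Rdiv_le_0_compat; [apply pos_INR|lra]).
  assert (HA : 0 <= a x) by auto.
  destruct (q_bounds n) as [Q1 Q2].
  destruct (I_bounds n) as [I1 I2]. fold x in I1, I2.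
  destruct (ex_intro (fun I : R => I = RInt a 0 x) _ eq_refl) as [I HI].
  rewrite <- HI in I1, I2.
  pose proof (tele n) as T. fold x in T.
  replace (INR 0 / sqrt s) with 0 in T by (simpl; field; lra).
  assert (Ha0 : 0 <= a 0) by (apply a_nonneg; lra).
  pose proof (Sq_bound n) as SQ. fold x in SQ.
  assert (Exn : INR (S n) * (/ sqrt s * a x) ^ 2 = / sqrt s * (x * (a x) ^ 2)).
  { unfold x. rewrite plus_INR, S_INR. simpl. field. lra. }
  rewrite Exn in SQ.
  assert (HE0 : 0 <= / sqrt s * (x * a x ^ 2)) by (apply Rmult_le_pos; [lra| apply Rmult_le_pos; [lra| apply pow2_ge_0]]).
  assert (HE1 : 0 <= / sqrt s * a x) by (apply Rmult_le_pos; lra).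
  assert (EE : E = / sqrt s * a x + / sqrt s * (x * a x ^ 2)) by (unfold E; ring).
  assert (HE3 : 0 <= / sqrt s * a 0) by (apply Rmult_le_pos; lra).
  set (r := q_adm a s n * exp I).
  assert (R1 : exp (- E) <= r).
  { unfold r. apply Rle_trans with (exp (- Sup a s n) * exp I).
    - rewrite <- exp_plus. apply exp_mono. clearbody r. clear HI. clearbody E x. lra.
    - apply Rmult_le_compat_r; [apply Rlt_le, exp_pos| exact Q1]. }
  assert (R2 : r <= exp E).
  { unfold r. apply Rle_trans with (exp (- Sup a s n + Sq a s n) * exp I).
    - apply Rmult_le_compat_r; [apply Rlt_le, exp_pos| exact Q2].
    - rewrite <- exp_plus. apply exp_mono. clearbody r. clear HI. clearbody E x. lra. }
  assert (HE2 : 0 <= E) by lra.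
  pose proof (exp_ineq1_le (- E)) as L1.
  assert (L2 : exp E <= 1 + 2 * E).
  { rewrite <- (Ropp_involutive E), exp_Ropp, Ropp_involutive.
    apply Rle_trans with (/ (1 - E)).
    - apply Rinv_le_contravar; lra.
    - assert (Z : 1 + 2 * E - / (1 - E) = E * (1 - 2 * E) / (1 - E)) by (field; lra).
      assert (0 <= E * (1 - 2 * E) / (1 - E)).
      { apply Rdiv_le_0_compat; [apply Rmult_le_pos|]; lra. }
      lra. }
  exists (r - 1). split.
  - apply Rabs_le. lra.
  - unfold f_adm. rewrite <- HI. unfold r.
    replace (exp (- I) * (1 + (q_adm a s n * exp I - 1))) with
      (q_adm a s n * (exp I * exp (- I))) by ring.
    rewrite <- exp_plus. replace (I + - I) with 0 by ring. rewrite exp_0. ring.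
Qed.
End Core.

Definition Gf (a : R -> R) (y : R) : R := a y + y * (a y) ^ 2.
Fixpoint cnt (a : R -> R) (t : R) (K : nat) : nat :=
  match K with
  | O => O
  | S K' => (cnt a t K' + if Rle_dec (Gf a (INR (S K'))) t then 1 else 0)%nat
  end.
Definition Nf (a : R -> R) (s : R) : nat := cnt a (sqrt (sqrt s)) (Z.to_nat (up s)).
Definition psi_of (a : R -> R) (s : R) : R := INR (Nf a s) - / s.

Section Psi.
Variable a : R -> R.
Hypothesis a_nonneg : forall x, 0 <= x -> 0 <= a x.
Hypothesis a_mono : forall x y, 0 <= x -> x <= y -> a x <= a y.

Lemma Gf_mono x y : 0 <= x -> x <= y -> Gf a x <= Gf a y.
Proof.
  intros Hx Hxy. unfold Gf.
  assert (a x <= a y) by auto. assert (0 <= a x) by auto.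
  assert (a x ^ 2 <= a y ^ 2) by (simpl; nra).
  assert (x * a x ^ 2 <= y * a y ^ 2).
  { apply Rmult_le_compat; auto. apply pow2_ge_0. }
  lra.
Qed.

Lemma cnt_le_K t K : (cnt a t K <= K)%nat.
Proof. induction K; cbn [cnt]; [lia|]. destruct (Rle_dec _ _); lia. Qed.

Lemma cnt_prop t K : (1 <= cnt a t K)%nat -> Gf a (INR (cnt a t K)) <= t.
Proof.
  induction K as [|K IH]; cbn [cnt]; [lia|].
  destruct (Rle_dec (Gf a (INR (S K))) t) as [Hle|Hn].
  - intros _. apply Rle_trans with (Gf a (INR (S K))); auto.
    apply Gf_mono; [apply pos_INR|]. apply le_INR. pose proof (cnt_le_K t K). lia.
  - rewrite Nat.add_0_r. exact IH.
Qed.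

Lemma cnt_mono_K t K1 K2 : (K1 <= K2)%nat -> (cnt a t K1 <= cnt a t K2)%nat.
Proof.
  induction K2 as [|K2 IH]; intros H.
  - replace K1 with 0%nat by lia. lia.
  - destruct (Nat.eq_dec K1 (S K2)) as [->|Hn]; [lia|].
    cbn [cnt]. specialize (IH ltac:(lia)). lia.
Qed.

Lemma cnt_mono_t t1 t2 K : t1 <= t2 -> (cnt a t1 K <= cnt a t2 K)%nat.
Proof.
  intros Ht. induction K; cbn [cnt]; [lia|].
  destruct (Rle_dec _ t1); destruct (Rle_dec _ t2); try lia.
  match goal with H : ~ _ |- _ => exfalso; apply H; lra end.
Qed.

Lemma cnt_full t K : (forall j, (1 <= j <= K)%nat -> Gf a (INR j) <= t) -> cnt a t K = K.
Proof.
  induction K as [|K IH]; intros H; cbn [cnt]; [reflexivity|].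
  rewrite IH by (intros; apply H; lia).
  destruct (Rle_dec _ _) as [_|Hn]; [lia|]. exfalso. apply Hn. apply H. lia.
Qed.

Lemma up_mono x y : x <= y -> (up x <= up y)%Z.
Proof.
  intros H. destruct (archimed x) as [A1 A2]. destruct (archimed y) as [B1 B2].
  assert (IZR (up x) < IZR (up y + 1)) by (rewrite plus_IZR; simpl; lra).
  apply lt_IZR in H0. lia.
Qed.

Lemma Nf_mono s t : s <= t -> (Nf a s <= Nf a t)%nat.
Proof.
  intros H. unfold Nf. apply Nat.le_trans with (cnt a (sqrt (sqrt t)) (Z.to_nat (up s))).
  - apply cnt_mono_t. apply sqrt_le_1_alt, sqrt_le_1_alt. exact H.
  - apply cnt_mono_K. pose proof (up_mono s t H). lia.
Qed.

End Psi.

Lemma rpow_quarter s : 0 < s -> Rpower s (- / 4) = / sqrt (sqrt s).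
Proof.
  intros Hs. rewrite Rpower_Ropp. f_equal.
  replace (/ 4) with (/ 2 * / 2) by field.
  rewrite <- Rpower_mult. rewrite (Rpower_sqrt s Hs).
  apply Rpower_sqrt. apply sqrt_lt_R0. exact Hs.
Qed.

Theorem proposition5p1 (a : R -> R)
  (a_nonneg : forall x, 0 <= x -> 0 <= a x)
  (a_mono : forall x y, 0 <= x -> x <= y -> a x <= a y) :
  exists psi : R -> R,
    (forall s t, 1 <= s -> s < t -> psi s < psi t) /\
    (forall M : R, exists S0 : R, forall s, S0 <= s -> M <= psi s) /\
    (exists C s0 : R, 1 <= s0 /\ forall (s : R) (n : nat),
        s0 <= s -> INR (n + 1) <= sqrt s * psi s ->
        exists eps : R, Rabs eps <= C * Rpower s (- / 4) /\
          q_adm a s n = f_adm a (INR (n + 1) / sqrt s) * (1 + eps)).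
Proof.
  exists (psi_of a). split; [|split].
  - intros s t Hs Hst. unfold psi_of.
    assert (INR (Nf a s) <= INR (Nf a t)) by (apply le_INR, Nf_mono; lra).
    assert (/ t < / s) by (apply Rinv_lt_contravar; [apply Rmult_lt_0_compat|]; lra).
    lra.
  - intros M.
    set (z := up (Rabs M + 1)).
    destruct (archimed (Rabs M + 1)) as [Z1 Z2]. fold z in Z1, Z2.
    assert (Hz : (0 <= z)%Z) by (apply le_IZR; pose proof (Rabs_pos M); lra).
    set (m := Z.to_nat z).
    assert (Hm : INR m = IZR z) by (unfold m; rewrite INR_IZR_INZ, Z2Nat.id; auto).
    assert (HG0 : 0 <= Gf a (INR m)).
    { unfold Gf. pose proof (pos_INR m). assert (0 <= a (INR m)) by auto.
      assert (0 <= INR m * a (INR m) ^ 2) by (apply Rmult_le_pos; [lra|apply pow2_ge_0]). lra. }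
    exists (Rmax 1 (Rmax (INR m) ((Gf a (INR m) * Gf a (INR m)) * (Gf a (INR m) * Gf a (INR m))))).
    intros s Hs.
    pose proof (Rmax_l 1 (Rmax (INR m) ((Gf a (INR m) * Gf a (INR m)) * (Gf a (INR m) * Gf a (INR m))))) as M1.
    pose proof (Rmax_r 1 (Rmax (INR m) ((Gf a (INR m) * Gf a (INR m)) * (Gf a (INR m) * Gf a (INR m))))) as M2.
    pose proof (Rmax_l (INR m) ((Gf a (INR m) * Gf a (INR m)) * (Gf a (INR m) * Gf a (INR m)))) as M3.
    pose proof (Rmax_r (INR m) ((Gf a (INR m) * Gf a (INR m)) * (Gf a (INR m) * Gf a (INR m)))) as M4.
    assert (Ht : Gf a (INR m) <= sqrt (sqrt s)).
    { rewrite <- (sqrt_square (Gf a (INR m))) by exact HG0.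
      apply sqrt_le_1_alt.
      rewrite <- (sqrt_square (Gf a (INR m) * Gf a (INR m))) by (apply Rmult_le_pos; lra).
      apply sqrt_le_1_alt. lra. }
    assert (HK : (m <= Z.to_nat (up s))%nat).
    { destruct (archimed s) as [U1 U2].
      assert (IZR z < IZR (up s)) by lra. apply lt_IZR in H.
      unfold m. lia. }
    assert (HN : (m <= Nf a s)%nat).
    { unfold Nf. rewrite <- (cnt_full a (sqrt (sqrt s)) m) at 1.
      - apply cnt_mono_K. exact HK.
      - intros j Hj. apply Rle_trans with (Gf a (INR m)); auto.
        apply Gf_mono; auto; [apply pos_INR| apply le_INR; lia]. }
    unfold psi_of.
    apply le_INR in HN.
    assert (/ s <= 1) by (rewrite <- Rinv_1; apply Rinv_le_contravar; lra).
    pose proof (Rle_abs M). lra.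
  - exists 2, 16. split; [lra|]. intros s n Hs Hn.
    assert (Hs0 : 0 < s) by lra.
    pose proof (sqrt_lt_R0 s Hs0) as Hq.
    set (t := sqrt (sqrt s)).
    assert (Htt : t * t = sqrt s) by (unfold t; apply sqrt_sqrt; lra).
    assert (Ht2 : 2 <= t).
    { unfold t. replace 2 with (sqrt (sqrt 16)).
      - apply sqrt_le_1_alt, sqrt_le_1_alt. lra.
      - replace 16 with ((2 * 2) * (2 * 2)) by ring.
        rewrite sqrt_square by lra. apply sqrt_square. lra. }
    set (x := INR (n + 1) / sqrt s).
    assert (Hx1 : x <= psi_of a s).
    { unfold x. apply (Rmult_le_reg_l (sqrt s)); [lra|].
      replace (sqrt s * (INR (n + 1) / sqrt s)) with (INR (n + 1)) by (field; lra). exact Hn. }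
    assert (Hx0 : 0 < x).
    { unfold x. apply Rdiv_lt_0_compat; [apply lt_0_INR; lia|lra]. }
    unfold psi_of in Hx1.
    assert (Hsi : 0 < / s) by (apply Rinv_0_lt_compat; lra).
    assert (HN1 : (1 <= Nf a s)%nat).
    { destruct (Nf a s) eqn:E; [simpl in Hx1; lra| lia]. }
    pose proof (cnt_prop a a_nonneg a_mono _ _ HN1) as HC. fold (Nf a s) in HC. fold t in HC.
    assert (HGx : Gf a x <= t).
    { apply Rle_trans with (Gf a (INR (Nf a s))); auto. apply Gf_mono; auto; lra. }
    set (E := / sqrt s * (a x + x * (a x) ^ 2)).
    assert (HE : E <= / t).
    { unfold E. fold (Gf a x). rewrite <- Htt.
      replace (/ t) with (/ (t * t) * t) by (field; lra).
      apply Rmult_le_compat_l; [apply Rlt_le, Rinv_0_lt_compat; nra|exact HGx]. }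
    assert (/ t <= 1/2) by (replace (1/2) with (/ 2) by field; apply Rinv_le_contravar; lra).
    destruct (core a a_nonneg a_mono s ltac:(lra) n ltac:(fold x; fold E; lra)) as [eps [He1 He2]].
    exists eps. split.
    + rewrite rpow_quarter by lra. fold t. fold x in He1. fold E in He1. lra.
    + exact He2.
Qed.
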